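(* Assume $\mathfrak{d}=\omega_1$, and let $\langle f_\alpha:\alpha<\omega_1\rangle$ be functions in ${}^\omega\omega$ with $f_\alpha<^*f_\beta$ whenever $\alpha<\beta$ and such that every $g\in{}^\omega\omega$ satisfies $g<^*f_\alpha$ for some $\alpha$. Let $\{P_i:i<\omega\}$ be a partition of $\omega$ into infinite sets, $Z_\alpha=\{n:\exists i\,(n\in P_i\text{ and }n>f_\alpha(i))\}$, and let $X$ be the space on $(\omega\times\omega_1)\cup\{\infty\}$ with points of $\omega\times\omega_1$ isolated and a local subbase at $\infty$ consisting of the sets $X\setminus(P_i\times\omega_1)$ ($i<\omega$) and $X\setminus(Z_\alpha\times\alpha)$ ($\alpha<\omega_1$). Then $X$ is not $U$-selective for any ultrafilter $U$ on $\omega$ which is not a $P$-point.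
   Context: $f<^*g$ means $f(n)<g(n)$ for all but finitely many $n$. $\mathcal{F}(X)$ is the set of nonempty closed subsets of $X$; $\varphi:Y\rightarrow\mathcal{F}(X)$ is lower semicontinuous if for every open $W\subseteq X$, $\{y:\varphi(y)\cap W\neq\emptyset\}$ is open in $Y$. $X$ is $Y$-selective if every lower semicontinuous $\varphi:Y\rightarrow\mathcal{F}(X)$ has a continuous selection. For a filter $U$ on $\omega$, $Y_U$ is the space on $\omega\cup\{\infty\}$ with points of $\omega$ isolated and neighborhoods of $\infty$ the sets $A\cup\{\infty\}$, $A\in U$; $U$-selective means $Y_U$-selective. An ultrafilter $U$ on $\omega$ is a $P$-point if every function $\omega\rightarrow\omega$ is either constant or finite-to-one on some set in $U$. *)

(* Defs.v *)
(* Sets are predicates [T -> Prop]; a topological space is a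
   carrier type together with its predicate of open sets. *)
From Stdlib Require Import List Arith.

Definition set (T : Type) := T -> Prop.

Definition is_closed {X : Type} (openX : set X -> Prop) (F : set X) : Prop :=
  openX (fun x => ~ F x).

Definition nonempty_closed {X : Type} (openX : set X -> Prop) (F : set X) : Prop :=
  (exists x, F x) /\ is_closed openX F.

Definition continuous_map {Y X : Type} (openY : set Y -> Prop) (openX : set X -> Prop)
  (s : Y -> X) : Prop :=
  forall W : set X, openX W -> openY (fun y => W (s y)).

Definition lsc {Y X : Type} (openY : set Y -> Prop) (openX : set X -> Prop)
  (phi : Y -> set X) : Prop :=
  forall W : set X, openX W -> openY (fun y => exists x, phi y x /\ W x).

Definition selective {Y X : Type} (openY : set Y -> Prop) (openX : set X -> Prop) : Prop :=
  forall phi : Y -> set X,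
    (forall y, nonempty_closed openX (phi y)) ->
    lsc openY openX phi ->
    exists s : Y -> X, continuous_map openY openX s /\ forall y, phi y (s y).

Definition ultrafilter (U : set (set nat)) : Prop :=
  U (fun _ => True) /\
  ~ U (fun _ => False) /\
  (forall A B : set nat, U A -> (forall n, A n -> B n) -> U B) /\
  (forall A B : set nat, U A -> U B -> U (fun n => A n /\ B n)) /\
  (forall A : set nat, U A \/ U (fun n => ~ A n)).

Definition P_point (U : set (set nat)) : Prop :=
  forall h : nat -> nat, exists A : set nat, U A /\
    ((exists c, forall n, A n -> h n = c) \/
     (forall k, exists N, forall n, A n -> h n = k -> n < N)).

(* Y_U: points omega ∪ {oo} encoded as [option nat] with [None] = oo;
   points of omega isolated, neighbourhoods of oo are A ∪ {oo}, A ∈ U. *)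
Definition YU_open (U : set (set nat)) (W : set (option nat)) : Prop :=
  W None -> exists A : set nat, U A /\ forall n, A n -> W (Some n).

Definition U_selective {X : Type} (U : set (set nat)) (openX : set X -> Prop) : Prop :=
  selective (YU_open U) openX.

Definition lt_star (f g : nat -> nat) : Prop :=
  exists N, forall n, N <= n -> f n < g n.

Definition infinite_nat (A : set nat) : Prop :=
  forall N, exists n, N <= n /\ A n.

(* (W, lt) is (order-isomorphic to) omega_1: a strict well-order which is
   uncountable and all of whose proper initial segments are countable. *)
Definition omega1_order (W : Type) (lt : W -> W -> Prop) : Prop :=
  (forall a, ~ lt a a) /\
  (forall a b c, lt a b -> lt b c -> lt a c) /\
  (forall a b, lt a b \/ a = b \/ lt b a) /\
  well_founded lt /\
  (~ exists g : W -> nat, forall a b, g a = g b -> a = b) /\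
  (forall c, exists g : W -> nat, forall a b, lt a c -> lt b c -> g a = g b -> a = b).

Definition infinite_partition (P : nat -> set nat) : Prop :=
  (forall n, exists i, P i n) /\
  (forall i j n, P i n -> P j n -> i = j) /\
  (forall i, infinite_nat (P i)).

Definition Zset {W : Type} (P : nat -> set nat) (f : W -> nat -> nat) (a : W) : set nat :=
  fun n => exists i, P i n /\ f a i < n.

(* The space X on (omega x omega_1) ∪ {oo} ([None] = oo): points of
   omega x omega_1 isolated, local subbase at oo consisting of
   X \ (P_i x omega_1) and X \ (Z_alpha x alpha). *)
Definition X_sub_P (P : nat -> set nat) {W : Type} (i : nat) : set (option (nat * W)) :=
  fun x => match x with None => True | Some (n, _) => ~ P i n end.

Definition X_sub_Z {W : Type} (lt : W -> W -> Prop) (P : nat -> set nat)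
  (f : W -> nat -> nat) (a : W) : set (option (nat * W)) :=
  fun x => match x with None => True | Some (n, b) => ~ (Zset P f a n /\ lt b a) end.

Definition X_open {W : Type} (lt : W -> W -> Prop) (P : nat -> set nat)
  (f : W -> nat -> nat) (O : set (option (nat * W))) : Prop :=
  O None ->
  exists (I : list nat) (J : list W),
    forall x, (forall i, In i I -> X_sub_P P i x) ->
              (forall a, In a J -> X_sub_Z lt P f a x) -> O x.

(* Main.v *)
Require Import Defs.
From Stdlib Require Import List Arith Lia Classical ClassicalEpsilon Cantor.

Lemma bound_countable (W : Type) (lt : W -> W -> Prop) (hW : omega1_order W lt)
  (beta : nat -> W) : exists a, forall n, lt (beta n) a.
Proof.
  destruct hW as [Hirr [Htr [Htri [Hwf [Hunc Hcnt]]]]].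
  apply NNPP; intro Hno.
  assert (H1 : forall a, exists n, a = beta n \/ lt a (beta n)).
  { intro a. apply NNPP; intro Hn. apply Hno. exists a. intro n.
    destruct (Htri (beta n) a) as [H|[H|H]]; auto;
    exfalso; apply Hn; exists n; auto. }
  destruct (choice _ Hcnt) as [G HG].
  destruct (choice _ H1) as [N HN].
  apply Hunc.
  exists (fun a => to_nat (N a, if excluded_middle_informative (a = beta (N a)) then 0
                              else S (G (beta (N a)) a))).
  intros a b Hab.
  apply (f_equal of_nat) in Hab. rewrite !cancel_of_to in Hab.
  injection Hab as HN1 Hc.
  destruct (excluded_middle_informative (a = beta (N a))) as [Ea|Ea];
  destruct (excluded_middle_informative (b = beta (N b))) as [Eb|Eb];
  try discriminate.
  - rewrite Ea, Eb, HN1; reflexivity.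
  - injection Hc as Hc. rewrite HN1 in Hc.
    destruct (HN a) as [X|X]; [contradiction|].
    destruct (HN b) as [Y|Y]; [contradiction|].
    rewrite HN1 in X.
    exact (HG _ a b X Y Hc).
Qed.

Lemma list_bound (W : Type) (lt : W -> W -> Prop) (hW : omega1_order W lt)
  (J : list W) : exists b, forall a, In a J -> ~ lt b a.
Proof.
  destruct hW as [Hirr [Htr [Htri [Hwf [Hunc Hcnt]]]]].
  induction J as [|a J IH].
  - apply NNPP; intro Hn. apply Hunc. exists (fun _ => 0).
    intros a. exfalso. apply Hn. exists a. intros x [].
  - destruct IH as [b Hb].
    destruct (classic (lt b a)) as [Hl|Hl].
    + exists a. intros c [Hc|Hc].
      * subst c. apply Hirr.
      * intro H. apply (Hb c Hc). eapply Htr; eauto.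
    + exists b. intros c [Hc|Hc]; [subst c; exact Hl| apply Hb; exact Hc].
Qed.

Theorem mainTheorem5
  (W : Type) (lt : W -> W -> Prop) (hW : omega1_order W lt)
  (f : W -> nat -> nat)
  (hmono : forall a b, lt a b -> lt_star (f a) (f b))
  (hdom : forall g : nat -> nat, exists a, lt_star g (f a))
  (P : nat -> set nat) (hP : infinite_partition P)
  (U : set (set nat)) (hU : ultrafilter U) (hnP : ~ P_point U) :
  ~ U_selective U (X_open lt P f).
Proof.
  destruct hU as [UT [UF [Umono [Uint Uult]]]].
  destruct hP as [Pcov [Pdis Pinf]].
  apply not_all_ex_not in hnP. destruct hnP as [h Hh].
  assert (Hh' : forall A, U A -> ~ ((exists c, forall n, A n -> h n = c) \/
     (forall k, exists N, forall n, A n -> h n = k -> n < N))).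
  { intros A HA Hc. apply Hh. exists A. auto. }
  assert (He : forall n, exists m, P (h n) m /\ n <= m).
  { intro n. destruct (Pinf (h n) n) as [m [Hm1 Hm2]]. eauto. }
  destruct (choice _ He) as [e He2].
  assert (Hneq : forall i, U (fun n => h n <> i)).
  { intro i. destruct (Uult (fun n => h n <> i)) as [H|H]; auto.
    exfalso. apply (Hh' _ H). left. exists i. intros n Hn. apply NNPP; auto. }
  intro Hsel.
  set (phi := fun y : option nat => match y with
     | None => fun x : option (nat * W) => x = None
     | Some n => fun x => match x with None => False | Some (m, _) => m = e n end end).
  destruct (Hsel phi) as [s [Hcont Hs]].
  - intros [n|].
    + split.
      * destruct (list_bound W lt hW nil) as [b _]. exists (Some (e n, b)). simpl. reflexivity.
      * unfold is_closed. intros _. destruct (Pcov (e n)) as [i Hi].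
        exists (i :: nil), nil. intros x Hx _.
        destruct x as [[m b]|]; simpl; auto.
        intro Hm. subst m. apply (Hx i (or_introl eq_refl)). exact Hi.
    + split.
      * exists None. reflexivity.
      * unfold is_closed. intro H. exfalso. apply H. reflexivity.
  - intros O HO [x [Hx1 Hx2]]. simpl in Hx1. subst x.
    destruct (HO Hx2) as [I [J HIJ]].
    destruct (list_bound W lt hW J) as [b Hb].
    assert (HA : U (fun n => forall i, In i I -> h n <> i)).
    { clear HIJ. induction I as [|i I IH].
      - apply (Umono _ _ UT). intros n _ i [].
      - apply (Umono _ _ (Uint _ _ (Hneq i) IH)).
        intros n [H1 H2] j [Hj|Hj]; [subst j; exact H1| exact (H2 j Hj)]. }
    exists (fun n => forall i, In i I -> h n <> i). split; auto.
    intros n Hn. exists (Some (e n, b)). split; [reflexivity|].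
    apply HIJ.
    + intros i Hi Hpi. apply (Hn i Hi). destruct (He2 n) as [Hp _].
      exact (Pdis _ _ _ Hp Hpi).
    + intros a Ha [_ Hl]. exact (Hb a Ha Hl).
  - destruct (list_bound W lt hW nil) as [w0 _].
    set (beta := fun n => match s (Some n) with Some (_, b) => b | None => w0 end).
    destruct (bound_countable W lt hW beta) as [al Hal].
    assert (Hop : X_open lt P f (X_sub_Z lt P f al)).
    { intros _. exists nil, (al :: nil). intros x _ Hx. apply Hx. left; reflexivity. }
    assert (HsN : s None = None) by exact (Hs None).
    destruct (Hcont _ Hop) as [A [HA HAs]].
    { rewrite HsN. exact I. }
    assert (HF : U (fun n => Zset P f al (e n))).
    { destruct (Uult (fun n => Zset P f al (e n))) as [H|H]; auto.
      exfalso. apply (Hh' _ H). right. intro k. exists (S (f al k)).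
      intros n Hn Hk. destruct (He2 n) as [Hp Hle].
      assert (e n <= f al k).
      { destruct (le_gt_dec (e n) (f al k)); auto. exfalso. apply Hn.
        exists k. subst k. auto. }
      lia. }
    apply UF. apply (Umono _ _ (Uint _ _ HA HF)).
    intros n [H1 H2]. pose proof (HAs n H1) as H3. clear H1; rename H3 into H1. pose proof (Hal n) as Hb.
    pose proof (Hs (Some n)) as Hsn. unfold beta in Hb.
    destruct (s (Some n)) as [[m b]|] eqn:E; simpl in Hsn; [|contradiction].
    subst m. apply H1. split; auto.
Qed.
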